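(* Let $C_6$ be the set of $6$-cycles in $S_6$ and $C_{24}^0$ the set of permutations of $\{1,\dots,6\}$ of the form $(1\,x_2)(x_3\,x_4\,x_5\,x_6)$ with $\{x_2,\dots,x_6\}=\{2,\dots,6\}$. For $\sigma=(1\,x_2)(x_3\,x_4\,x_5\,x_6)\in C_{24}^0$ define $$f(\sigma)=\{\sigma,\ (1\,x_3\,x_2\,x_5\,x_4\,x_6),\ (1\,x_4\,x_2\,x_6\,x_5\,x_3),\ (1\,x_5\,x_2\,x_3\,x_6\,x_4),\ (1\,x_6\,x_2\,x_4\,x_3\,x_5)\}$$ (this is well defined, i.e., independent of the cyclic representation of the $4$-cycle). Then for each $\sigma\in C_{24}^0$ the permutation matrices of the five elements of $f(\sigma)$ sum to $J_6-I_6$ (i.e., for every $i\ne j$ exactly one element of $f(\sigma)$ maps $i$ to $j$), and the sets $f(\sigma)$, $\sigma\in C_{24}^0$, are pairwise disjoint with union $C_{24}^0\cup C_6$. Hence $\{f(\sigma):\sigma\in C_{24}^0\}$ is a partition of $C_{24}^0\cup C_6$ into $30$ subsets, each a $1$-factorization of $L_{6,1}$.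
   Context: Permutations are written in cycle notation; the permutation matrix of $\pi$ has a $1$ in position $(i,\pi(i))$. $J_6$ is the $6\times6$ all-ones matrix and $I_6$ the identity. $L_{6,1}=K_{6,6}-6K_{1,1}$ has biadjacency matrix $J_6-I_6$; a $1$-factorization of it is a set of derangement permutation matrices summing to $J_6-I_6$. *)

(* Defs.v *)
(* Points 1..6 of the paper are represented by 'I_6 = {0,..,5}
   (paper's point k is ord k.-1; in particular paper's 1 is ord0). *)
From HB Require Import structures.
From mathcomp Require Import all_boot all_order all_algebra all_fingroup.
Set Implicit Arguments. Unset Strict Implicit. Unset Printing Implicit Defensive.

(* The cycle (c_0 c_1 ... c_{k-1}) as a function: c_i |-> c_{i+1 mod k},
   other points fixed.  This is path.v's [next]. *)
Definition cyc (c : seq 'I_6) : 'I_6 -> 'I_6 := next c.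

Definition xx (t : 5.-tuple 'I_6) (k : nat) : 'I_6 := nth ord0 t (k - 2).

(* {x2,...,x6} = {2,...,6} (i.e. all points other than "1" = ord0, distinct) *)
Definition valid_rep (t : 5.-tuple 'I_6) : bool := uniq (ord0 :: val t).

Definition sig_fun (t : 5.-tuple 'I_6) (i : 'I_6) : 'I_6 :=
  cyc [:: ord0; xx t 2] (cyc [:: xx t 3; xx t 4; xx t 5; xx t 6] i).

Definition rep (t : 5.-tuple 'I_6) (s : {perm 'I_6}) : bool :=
  valid_rep t && [forall i, s i == sig_fun t i].

Definition C24_0 : {set {perm 'I_6}} := [set s | [exists t, rep t s]].

Definition C6 : {set {perm 'I_6}} := [set s : {perm 'I_6} | porbits s == [set [set: 'I_6]]].

Definition gfun (t : 5.-tuple 'I_6) (k : 'I_5) : 'I_6 -> 'I_6 :=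
  match val k with
  | 0 => sig_fun t
  | 1 => cyc [:: ord0; xx t 3; xx t 2; xx t 5; xx t 4; xx t 6]
  | 2 => cyc [:: ord0; xx t 4; xx t 2; xx t 6; xx t 5; xx t 3]
  | 3 => cyc [:: ord0; xx t 5; xx t 2; xx t 3; xx t 6; xx t 4]
  | _ => cyc [:: ord0; xx t 6; xx t 2; xx t 4; xx t 3; xx t 5]
  end.

Definition fx (t : 5.-tuple 'I_6) : {set {perm 'I_6}} :=
  [set tau : {perm 'I_6} | [exists k : 'I_5, [forall i, tau i == gfun t k i]]].

Definition f (s : {perm 'I_6}) : {set {perm 'I_6}} :=
  if [pick t | rep t s] is Some t then fx t else set0.

Definition JmI : 'M[int]_6 := (const_mx 1 - 1%:M)%R.

(* Main.v *)
Require Import Defs.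
From HB Require Import structures.
From mathcomp Require Import all_boot all_order all_algebra all_fingroup.
Set Implicit Arguments. Unset Strict Implicit. Unset Printing Implicit Defensive.

Definition o6 (m : nat) (h : m < 6) : 'I_6 := Ordinal h.
Definition E6 : seq 'I_6 := [:: o6 (m:=0) isT; o6 (m:=1) isT; o6 (m:=2) isT; o6 (m:=3) isT; o6 (m:=4) isT; o6 (m:=5) isT].
Definition E5 : seq 'I_5 := [:: @Ordinal 5 0 isT; @Ordinal 5 1 isT; @Ordinal 5 2 isT; @Ordinal 5 3 isT; @Ordinal 5 4 isT].

Definition xxs (t : seq 'I_6) (k : nat) : 'I_6 := nth ord0 t (k - 2).
Definition sigs (t : seq 'I_6) (i : 'I_6) : 'I_6 :=
  cyc [:: ord0; xxs t 2] (cyc [:: xxs t 3; xxs t 4; xxs t 5; xxs t 6] i).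
Definition gfuns (t : seq 'I_6) (k : 'I_5) : 'I_6 -> 'I_6 :=
  match val k with
  | 0 => sigs t
  | 1 => cyc [:: ord0; xxs t 3; xxs t 2; xxs t 5; xxs t 4; xxs t 6]
  | 2 => cyc [:: ord0; xxs t 4; xxs t 2; xxs t 6; xxs t 5; xxs t 3]
  | 3 => cyc [:: ord0; xxs t 5; xxs t 2; xxs t 3; xxs t 6; xxs t 4]
  | _ => cyc [:: ord0; xxs t 6; xxs t 2; xxs t 4; xxs t 3; xxs t 5]
  end.

Definition code (g : 'I_6 -> 'I_6) : seq 'I_6 := map g E6.
Definition injb (g : 'I_6 -> 'I_6) := all (fun x => all (fun y => (g x == g y) ==> (x == y)) E6) E6.
Definition fullb (g : 'I_6 -> 'I_6) := all (fun x => all (fun y => has (fun i : 'I_6 => iter i g x == y) E6) E6) E6.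
Definition validb (s : seq 'I_6) := uniq (ord0 :: s).

Definition LV : seq (seq 'I_6) :=
  [seq s <- flatten [seq flatten [seq flatten [seq flatten [seq [seq [:: a; b; c; d; e] | e <- E6] | d <- E6] | c <- E6] | b <- E6] | a <- E6] | validb s].

Definition check_single (t : seq 'I_6) : bool :=
  all (fun k => injb (gfuns t k)) E5 &&
  all (fun k : 'I_5 => (val k != 0) ==> fullb (gfuns t k)) E5 &&
  all (fun i => all (fun j => count (fun k => gfuns t k i == j) E5 == (i != j)) E6) E6.

Lemma c0 : let L := LV in all (fun a => all (fun b => all (fun c => all (fun d => all (fun e =>
  if validb [:: a; b; c; d; e] then (check_single [:: a; b; c; d; e] && ([:: a; b; c; d; e] \in L)) else true) E6) E6) E6) E6) E6.
Proof. Time vm_compute. reflexivity. Qed.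

Lemma c2 : let L := [seq (code (sigs t), [seq code (gfuns t k) | k <- E5]) | t <- LV] in
  all (fun a => all (fun b => if a.1 == b.1 then all (fun x => x \in b.2) a.2 else all (fun x => x \notin b.2) a.2) L) L.
Proof. Time vm_compute. reflexivity. Qed.

Definition fw (w : seq 'I_6) (i : 'I_6) : 'I_6 := nth ord0 w i.
Lemma c3 : let L := LV in all (fun a => all (fun b => all (fun c => all (fun d => all (fun e => all (fun g =>
  let w := [:: a; b; c; d; e; g] in
  if injb (fw w) then if fullb (fw w) then
   has (fun t => has (fun k => (val k != 0) && (code (gfuns t k) == code (fw w))) E5) L else true else true) E6) E6) E6) E6) E6) E6.
Proof. Time vm_compute. reflexivity. Qed.

Lemma c4 : let L := LV in size (undup [seq code (sigs t) | t <- L]) = 30.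
Proof. Time vm_compute. reflexivity. Qed.

Lemma c5 : all (fun t => uniq [seq code (gfuns t k) | k <- E5] && (size t == 5) && validb t) LV.
Proof. Time vm_compute. reflexivity. Qed.

Lemma E6P (i : 'I_6) : i \in E6.
Proof. by case: i => [[|[|[|[|[|[|m]]]]]] h]. Qed.
Lemma E5P (i : 'I_5) : i \in E5.
Proof. by case: i => [[|[|[|[|[|m]]]]] h]. Qed.

Lemma fwE (g : 'I_6 -> 'I_6) : fw (code g) =1 g.
Proof.
by case=> [[|[|[|[|[|[|m]]]]]] h] //=; congr (g _); apply: val_inj.
Qed.

Lemma injbP g : injb g -> injective g.
Proof.
move=> /allP H x y e; have := allP (H x (E6P x)) y (E6P y).
by rewrite e eqxx => /eqP.
Qed.

Lemma codeP g h : code g = code h -> g =1 h.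
Proof. by move=> /eq_in_map H x; apply: H; apply: E6P. Qed.
Lemma codeE g h : g =1 h -> code g = code h.
Proof. by move=> H; apply/eq_in_map => x _; apply: H. Qed.

Lemma fullbE g h : g =1 h -> fullb g = fullb h.
Proof.
move=> H; rewrite /fullb; apply: eq_all => x; apply: eq_all => y.
by apply: eq_has => i /=; rewrite (eq_iter H).
Qed.

Definition mkp (g : 'I_6 -> 'I_6) : {perm 'I_6} :=
  match injb g =P true with ReflectT h => perm (injbP h) | ReflectF _ => 1%g end.

Lemma mkpE g : injb g -> mkp g =1 g.
Proof. by rewrite /mkp; case: (injb g =P true) => // h _ i; rewrite permE. Qed.

Lemma forall5 (P : seq 'I_6 -> bool) :
  all (fun a => all (fun b => all (fun c => all (fun d => all (fun e =>
      P [:: a; b; c; d; e]) E6) E6) E6) E6) E6 ->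
  forall t : 5.-tuple 'I_6, P t.
Proof.
move=> H [[|a[|b[|c[|d[|e[|]]]]]] //] _ /=.
have:= allP H a (E6P a) => /allP/(_ b (E6P b)) /allP/(_ c (E6P c)).
by move=> /allP/(_ d (E6P d)) /allP/(_ e (E6P e)).
Qed.

Lemma single (t : 5.-tuple 'I_6) : validb t -> check_single t && (val t \in LV).
Proof.
move=> Vt.
have := @forall5 (fun s => if validb s then check_single s && (s \in LV) else true).
by move=> /(_ c0 t); rewrite Vt.
Qed.


Lemma v_inj (t : 5.-tuple 'I_6) (Vt : valid_rep t) k : injb (gfun t k).
Proof. by case/andP: (single Vt) => /andP[/andP[/allP H _] _] _; apply: H (E5P k). Qed.
Lemma v_full (t : 5.-tuple 'I_6) (Vt : valid_rep t) k : val k != 0 -> fullb (gfun t k).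
Proof. by case/andP: (single Vt) => /andP[/andP[_ /allP H] _] _; move: (H k (E5P k)) => /implyP. Qed.
Lemma v_count (t : 5.-tuple 'I_6) (Vt : valid_rep t) i j : count (fun k => gfun t k i == j) E5 = (i != j).
Proof.
by case/andP: (single Vt) => /andP[_ /allP H] _; apply/eqP; move: (H i (E6P i)) => /allP; apply; apply: E6P.
Qed.
Lemma v_LV (t : 5.-tuple 'I_6) (Vt : valid_rep t) : val t \in LV.
Proof. by case/andP: (single Vt). Qed.

Definition codes (t : seq 'I_6) := [seq code (gfuns t k) | k <- E5].
Definition F2 (t : seq 'I_6) := (code (sigs t), codes t).
Definition LF := map F2 LV.
Lemma c2' : all (fun a => all (fun b => if a.1 == b.1 then all (fun x => x \in b.2) a.2 else all (fun x => x \notin b.2) a.2) LF) LF.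
Proof. exact: c2. Qed.

Lemma pairs t u : t \in LV -> u \in LV ->
  if code (sigs t) == code (sigs u) then all (fun x => x \in codes u) (codes t)
  else all (fun x => x \notin codes u) (codes t).
Proof.
move=> Ht Hu; have := c2'.
move=> /allP/(_ (F2 t) (map_f F2 Ht)) /allP/(_ (F2 u) (map_f F2 Hu)).
by [].
Qed.


Lemma fx_sub t u : valid_rep t -> valid_rep u -> code (sigs t) = code (sigs u) ->
  forall tau, tau \in fx t -> tau \in fx u.
Proof.
move=> Vt Vu e.
have := pairs (v_LV Vt) (v_LV Vu).
rewrite e eqxx.
move=> /allP H tau Ht.
rewrite in_set in Ht.
case/existsP: Ht => k /forallP Hk.
have : code (gfuns t k) \in codes u by apply: H; apply: (map_f (fun k => code (gfuns t k))); apply: E5P.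
case/mapP => k' _ e'.
rewrite in_set.
apply/existsP; exists k'; apply/forallP => i.
by rewrite (eqP (Hk i)); apply/eqP; exact: (codeP e' i).
Qed.

Lemma rep_valid t s : rep t s -> valid_rep t.
Proof. by case/andP. Qed.
Lemma rep_fun t s : rep t s -> s =1 sig_fun t.
Proof. by case/andP => _ /forallP H i; apply/eqP. Qed.

Lemma WD s t u : rep t s -> rep u s -> fx t = fx u.
Proof.
move=> Ht Hu.
have e : code (sigs t) = code (sigs u).
  apply: codeE => i; transitivity (s i); [exact: esym (rep_fun Ht i) | exact: rep_fun Hu i].
have Vt := rep_valid Ht; have Vu := rep_valid Hu.
apply/setP => tau; apply/idP/idP; [exact: fx_sub | apply: fx_sub => //; exact: esym].
Qed.

Lemma f_rep s t : rep t s -> f s = fx t.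
Proof.
move=> Ht; rewrite /f; case: pickP => [u Hu|H]; last by rewrite H in Ht.
exact: WD Hu Ht.
Qed.

Lemma in_fx t tau : (tau \in fx t) = [exists k : 'I_5, [forall i, tau i == gfun t k i]].
Proof. by rewrite in_set. Qed.

Lemma fx_eq t : valid_rep t -> fx t = [set mkp (gfun t k) | k : 'I_5].
Proof.
move=> Vt; apply/setP=> tau; rewrite in_fx; apply/existsP/imsetP.
  case=> k /forallP H; exists k => //; apply/permP => i.
  by rewrite mkpE ?(eqP (H i)) //; apply: v_inj.
case=> k _ ->; exists k; apply/forallP => i; rewrite mkpE //; exact: v_inj.
Qed.

Lemma mkp_rep t : valid_rep t -> rep t (mkp (sig_fun t)).
Proof.
move=> Vt; apply/andP; split=> //; apply/forallP => i; rewrite mkpE //.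
exact: (v_inj Vt ord0).
Qed.

Lemma C24P s : s \in C24_0 -> exists t, rep t s.
Proof. by rewrite in_set => /existsP. Qed.

Lemma self_in s : s \in C24_0 -> s \in f s.
Proof.
case/C24P => t Ht; rewrite (f_rep Ht) in_fx; apply/existsP; exists ord0.
by apply/forallP => i; rewrite (rep_fun Ht i).
Qed.

Lemma disj s s' : s \in C24_0 -> s' \in C24_0 -> s != s' -> [disjoint f s & f s'].
Proof.
case/C24P => t Ht; case/C24P => u Hu ne; rewrite (f_rep Ht) (f_rep Hu).
have Vt := rep_valid Ht; have Vu := rep_valid Hu.
have := pairs (v_LV Vt) (v_LV Vu).
case: eqP => [e|_ /allP H].
  case/negP: ne; apply/eqP/permP => i.
  by rewrite (rep_fun Ht i) (rep_fun Hu i); apply: codeP e i.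
rewrite -setI_eq0; apply/eqP/setP => tau; rewrite in_set0 in_setI.
apply/negP => /andP[H1 H2].
rewrite in_fx in H1; rewrite in_fx in H2.
case/existsP: H1 => k /forallP Hk; case/existsP: H2 => k' /forallP Hk'.
have := H _ (map_f (fun k => code (gfuns t k)) (E5P k)).
suff -> : code (gfuns t k) = code (gfuns u k').
  by rewrite (map_f (fun k => code (gfuns u k)) (E5P k')).
apply: codeE => i; transitivity (tau i); [exact: esym (eqP (Hk i)) | exact: eqP (Hk' i)].
Qed.


Lemma c5' t : t \in LV -> [&& uniq (codes t), size t == 5 & validb t].
Proof. by move=> H; have := allP c5 t H; rewrite andbA. Qed.

Lemma uniq_map_inj (T1 T2 : eqType) (h : T1 -> T2) s x y :
  uniq (map h s) -> x \in s -> y \in s -> h x = h y -> x = y.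
Proof.
elim: s => //= a s IH /andP[Hn Hu]; rewrite !in_cons.
move=> /predU1P[->|Hx] /predU1P[->|Hy] e //.
- by rewrite e (map_f h Hy) in Hn.
- by rewrite -e (map_f h Hx) in Hn.
- exact: IH.
Qed.

Lemma gfun_inj t : valid_rep t -> injective (fun k => mkp (gfun t k)).
Proof.
move=> Vt k k' e.
have /and3P[Hu _ _] := c5' (v_LV Vt).
apply: (uniq_map_inj Hu (E5P k) (E5P k')).
apply: codeE => i.
transitivity (mkp (gfun t k) i); first by rewrite mkpE //; apply: v_inj.
by rewrite e mkpE //; apply: v_inj.
Qed.

Section RingPart.
Import GRing.Theory.
Local Open Scope ring_scope.
Lemma sum_count (s : seq 'I_5) (b : pred 'I_5) :
  \sum_(k <- s) (((nat_of_bool (b k))%:R : int)) = ((count b s)%:R : int).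
Proof. by elim: s => [|x s IH]; rewrite ?big_nil ?big_cons //= IH natrD. Qed.

Lemma part2 s : s \in C24_0 -> (\sum_(tau in f s) perm_mx tau)%R = JmI.
Proof.
case/C24P => t Ht; have Vt := rep_valid Ht.
rewrite (f_rep Ht) (fx_eq Vt).
rewrite big_imset /=; last by move=> k k' _ _; apply: gfun_inj.
apply/matrixP => i j; rewrite summxE.
rewrite (eq_bigr (fun k => ((nat_of_bool (gfun t k i == j))%:R : int))); last first.
  by move=> k _; rewrite /perm_mx !mxE mkpE //; apply: v_inj.
rewrite -big_enum (perm_big E5) /=; last first.
  apply: uniq_perm; first exact: enum_uniq.
    by [].
  by move=> k; rewrite mem_enum E5P ?inE.
rewrite sum_count v_count // /JmI !mxE.
by case: (i == j).
Qed.
End RingPart.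


Lemma full_C6 (tau : {perm 'I_6}) : fullb tau -> tau \in C6.
Proof.
move=> H.
have Ho : forall x, porbit tau x = setT.
  move=> x; apply/setP => y; rewrite in_setT.
  have /allP/(_ y (E6P y)) /hasP[i _ /eqP <-] := allP H x (E6P x).
  by rewrite -permX mem_porbit.
rewrite in_set; apply/eqP/setP => B; rewrite in_set1 /porbits.
apply/imsetP/eqP => [[x _ ->]|->]; first exact: Ho.
by exists ord0 => //; rewrite Ho.
Qed.

Lemma C6_full (tau : {perm 'I_6}) : tau \in C6 -> fullb tau.
Proof.
rewrite in_set => /eqP Hp.
have Ho x : porbit tau x = setT.
  have : porbit tau x \in porbits tau by apply: imset_f.
  by rewrite Hp in_set1 => /eqP.
apply/allP => x _; apply/allP => y _.
have : y \in porbit tau x by rewrite Ho in_setT.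
rewrite porbit_traject Ho cardsT card_ord => /trajectP[i hi ->].
by apply/hasP; exists (Ordinal hi); [exact: E6P | exact/eqP].
Qed.

Definition P3 (w : seq 'I_6) : bool :=
  if injb (fw w) then if fullb (fw w) then
   has (fun t => has (fun k => (val k != 0) && (code (gfuns t k) == code (fw w))) E5) LV
  else true else true.

Lemma c3z : all (fun a => all (fun b => all (fun c => all (fun d => all (fun e => all (fun g =>
  P3 [:: a; b; c; d; e; g]) E6) E6) E6) E6) E6) E6.
Proof. exact: c3. Qed.

Lemma c3' (g : 'I_6 -> 'I_6) : P3 (code g).
Proof.
have := c3z.
move=> /allP/(_ _ (E6P (g (o6 (m:=0) isT)))) /allP/(_ _ (E6P (g (o6 (m:=1) isT)))).
move=> /allP/(_ _ (E6P (g (o6 (m:=2) isT)))) /allP/(_ _ (E6P (g (o6 (m:=3) isT)))).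
move=> /allP/(_ _ (E6P (g (o6 (m:=4) isT)))) /allP/(_ _ (E6P (g (o6 (m:=5) isT)))).
exact.
Qed.

Lemma C6_rep (tau : {perm 'I_6}) : tau \in C6 ->
  exists (t : 5.-tuple 'I_6) (k : 'I_5), [/\ valid_rep t, val k != 0 & tau =1 gfun t k].
Proof.
move=> H.
have Hi : injb (fw (code tau)).
  apply/allP => x _; apply/allP => y _; apply/implyP => /eqP.
  by rewrite !fwE => /perm_inj ->.
have Hf : fullb (fw (code tau)) by rewrite (fullbE (fwE tau)); exact: C6_full.
have := c3' tau; rewrite /P3 Hi Hf => /hasP[t Ht /hasP[k _ /andP[nk /eqP e]]].
have /and3P[_ Hs Vt] := c5' Ht.
exists (Tuple Hs), k; split => // i.
by rewrite -(fwE tau i); symmetry; apply: codeP e i.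
Qed.

Lemma union : \bigcup_(s in C24_0) f s = C24_0 :|: C6.
Proof.
apply/setP => tau; apply/bigcupP/idP.
  case=> s Hs Hin; case/C24P: (Hs) => t Ht; have Vt := rep_valid Ht.
  rewrite (f_rep Ht) in_fx in Hin; case/existsP: Hin => k /forallP Hk.
  rewrite in_setU; apply/orP; case: k Hk => [[|m] hm] Hk.
    left; rewrite in_set; apply/existsP; exists t; apply/andP; split=> //.
    by apply/forallP => i; exact: Hk i.
  right; apply: full_C6.
  rewrite (fullbE (g:=tau) (h:=gfun t (Ordinal hm))); first exact: v_full.
  by move=> i; exact: eqP (Hk i).
rewrite in_setU => /orP[H|H]; first by exists tau => //; exact: self_in.
case: (C6_rep H) => t [k [Vt nk Hk]].
exists (mkp (sig_fun t)); first by rewrite in_set; apply/existsP; exists t; exact: mkp_rep.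
rewrite (f_rep (mkp_rep Vt)) in_fx; apply/existsP; exists k; apply/forallP => i.
by rewrite Hk.
Qed.


Lemma f_inj : {in C24_0 &, injective f}.
Proof.
move=> s s' Hs Hs' e; apply/eqP; apply: contraT => ne.
have D := disj Hs Hs' ne; rewrite e in D.
by have := disjointFr D (self_in Hs'); rewrite (self_in Hs').
Qed.

Lemma LV_tuple t : t \in LV -> exists tt : 5.-tuple 'I_6, val tt = t /\ valid_rep tt.
Proof. by move=> /c5' /and3P[_ Hs Vt]; exists (Tuple Hs). Qed.

Lemma C24_mem : C24_0 =i map (fun t => mkp (sigs t)) LV.
Proof.
move=> s; apply/idP/mapP.
  case/C24P => t Ht; have Vt := rep_valid Ht.
  exists (val t); first exact: v_LV.
  apply/permP => i; rewrite (rep_fun Ht i) mkpE //; exact: (v_inj Vt ord0).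
case=> t /LV_tuple [tt [<- Vt]] ->.
rewrite in_set; apply/existsP; exists tt; exact: mkp_rep.
Qed.

Lemma card_C24 : #|C24_0| = 30.
Proof.
set l := map (fun t => mkp (sigs t)) LV.
have -> : #|C24_0| = #|undup l|.
  by apply: eq_card => s; rewrite mem_undup C24_mem.
rewrite (card_uniqP (undup_uniq l)).
have hinj : injective (fun p : {perm 'I_6} => code p).
  by move=> p q e; apply/permP => i; apply: codeP e i.
rewrite -(size_map (fun p : {perm 'I_6} => code p)) -(undup_map_inj hinj).
rewrite -map_comp.
have -> : map ((fun p : {perm 'I_6} => code p) \o (fun t => mkp (sigs t))) LV =
          map (fun t => code (sigs t)) LV.
  apply/eq_in_map => t /LV_tuple [tt [<- Vt]] /=.
  by apply: codeE => i; rewrite mkpE //; exact: (v_inj Vt ord0).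
exact: c4.
Qed.

Theorem mainTheorem5 :
  (forall (s : {perm 'I_6}) (t u : 5.-tuple 'I_6), rep t s -> rep u s -> fx t = fx u) /\
  (forall s, s \in C24_0 -> (\sum_(tau in f s) perm_mx tau)%R = JmI) /\
  (forall s s', s \in C24_0 -> s' \in C24_0 -> s != s' -> [disjoint f s & f s']) /\
  \bigcup_(s in C24_0) f s = C24_0 :|: C6 /\
  partition [set f s | s in C24_0] (C24_0 :|: C6) /\
  #|[set f s | s in C24_0]| = 30.
Proof.
split; first exact: WD.
split; first exact: part2.
split; first exact: disj.
split; first exact: union.
split.
  apply/and3P; split.
  - by rewrite cover_imset union.
  - apply/trivIsetP => A B /imsetP[s Hs ->] /imsetP[s' Hs' ->] ne.
    apply: disj => //; apply: contraNneq ne => ->; done.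
  - apply/imsetP => -[s Hs e]; have := self_in Hs; by rewrite -e in_set0.
by rewrite card_in_imset ?card_C24 //; exact: f_inj.
Qed.
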